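(* Every word $W$ in the letters $\sigma_i,\sigma_i^{-1},x_i$ ($1\le i\le n-1$) is equal in $SB_n$ to $\Delta^m\overline{A}$ for some integer $m$ and some positive word $\overline{A}$ which is prime to $\Delta$ and is its own base; moreover this expression is unique: if $\Delta^m\overline{A}=\Delta^p\overline{C}$ in $SB_n$ with $m,p\in\mathbb Z$ and $\overline{A},\overline{C}$ positive words prime to $\Delta$ each equal to its own base, then $m=p$ and $\overline{A}\equiv\overline{C}$ (identical words).
   Context: Fix $n\ge 2$. The singular braid monoid $SB_n$ is the monoid with generators $\sigma_i,\sigma_i^{-1},x_i$ ($i=1,\dots,n-1$) and relations: $\sigma_i\sigma_j=\sigma_j\sigma_i$ and $x_ix_j=x_jx_i$ if $|i-j|>1$; $x_i\sigma_j=\sigma_jx_i$ if $|i-j|\ne1$; $\sigma_i\sigma_{i+1}\sigma_i=\sigma_{i+1}\sigma_i\sigma_{i+1}$; $\sigma_i\sigma_{i+1}x_i=x_{i+1}\sigma_i\sigma_{i+1}$; $\sigma_{i+1}\sigma_ix_{i+1}=x_i\sigma_{i+1}\sigma_i$; $\sigma_i\sigma_i^{-1}=\sigma_i^{-1}\sigma_i=1$. The positive singular braid monoid $SB_n^+$ has generators $\sigma_i,x_i$ and all these relations except the last. Positive words are words in $\sigma_i,x_i$; $A\doteq B$ means equality in $SB_n^+$; $\equiv$ means identity of words. $\Delta\equiv\sigma_1\cdots\sigma_{n-1}\,\sigma_1\cdots\sigma_{n-2}\cdots\sigma_1\sigma_2\,\sigma_1$. A positive word $A$ is prime to $\Delta$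 if there is no positive word $Z$ with $A\doteq\Delta Z$. Order positive words lexicographically with $\sigma_1<\sigma_2<\cdots<\sigma_{n-1}<x_1<\cdots<x_{n-1}$; the base of a positive word $W$ is the smallest (in this order) positive word positively equal to $W$ (positively equal words have equal length, so this is well defined). The form $\Delta^m\overline{A}$ is called the Garside left normal form of $W$, and $m$ its power. *)

(* Defs.v *)
From mathcomp Require Import all_boot all_order all_algebra.
From Stdlib Require Import Relations.
Set Implicit Arguments. Unset Strict Implicit. Unset Printing Implicit Defensive.

Inductive letter : Type :=
| Sg of nat
| Si of nat   (* sigma_i^{-1} *)
| X of nat.

Definition word := seq letter.

Definition letter_index (a : letter) : nat :=
  match a with Sg i => i | Si i => i | X i => i end.

Definition valid_word (n : nat) (w : word) : Prop :=
  all (fun a => (1 <= letter_index a) && (letter_index a <= n - 1)) w.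

Definition positive_letter (a : letter) : bool :=
  match a with Si _ => false | _ => true end.

Definition positive_word (w : word) : Prop := all positive_letter w.

Definition ok_idx (n i : nat) : Prop := 1 <= i /\ i <= n - 1.

Inductive pos_relation (n : nat) : word -> word -> Prop :=
| R_ss i j : ok_idx n i -> ok_idx n j -> 1 < `|(i:int) - (j:int)|%N ->
    pos_relation n [:: Sg i; Sg j] [:: Sg j; Sg i]
| R_xx i j : ok_idx n i -> ok_idx n j -> 1 < `|(i:int) - (j:int)|%N ->
    pos_relation n [:: X i; X j] [:: X j; X i]
| R_xs i j : ok_idx n i -> ok_idx n j -> `|(i:int) - (j:int)|%N != 1 ->
    pos_relation n [:: X i; Sg j] [:: Sg j; X i]
| R_braid i : ok_idx n i -> ok_idx n i.+1 ->
    pos_relation n [:: Sg i; Sg i.+1; Sg i] [:: Sg i.+1; Sg i; Sg i.+1]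
| R_sx1 i : ok_idx n i -> ok_idx n i.+1 ->
    pos_relation n [:: Sg i; Sg i.+1; X i] [:: X i.+1; Sg i; Sg i.+1]
| R_sx2 i : ok_idx n i -> ok_idx n i.+1 ->
    pos_relation n [:: Sg i.+1; Sg i; X i.+1] [:: X i; Sg i.+1; Sg i].

Inductive sb_relation (n : nat) : word -> word -> Prop :=
| R_pos l r : pos_relation n l r -> sb_relation n l r
| R_inv1 i : ok_idx n i -> sb_relation n [:: Sg i; Si i] [::]
| R_inv2 i : ok_idx n i -> sb_relation n [:: Si i; Sg i] [::].

Definition step (R : word -> word -> Prop) (w1 w2 : word) : Prop :=
  exists u v l r, R l r /\ w1 = u ++ l ++ v /\ w2 = u ++ r ++ v.

Definition sb_eq (n : nat) : relation word :=
  clos_refl_sym_trans word (step (sb_relation n)).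

Definition pos_eq (n : nat) : relation word :=
  clos_refl_sym_trans word (step (pos_relation n)).

(* Delta = sigma_1 ... sigma_{n-1} sigma_1 ... sigma_{n-2} ... sigma_1 sigma_2 sigma_1 *)
Definition Delta (n : nat) : word :=
  flatten [seq [seq Sg j.+1 | j <- iota 0 k] | k <- rev (iota 1 (n - 1))].

Definition inv_letter (a : letter) : letter :=
  match a with Sg i => Si i | Si i => Sg i | X i => X i end.

(* Delta^{-1} as a word (Delta contains only sigma letters) *)
Definition Delta_inv (n : nat) : word := rev (map inv_letter (Delta n)).

Definition Delta_pow (n : nat) (m : int) : word :=
  match m with
  | Posz k => flatten (nseq k (Delta n))
  | Negz k => flatten (nseq k.+1 (Delta_inv n))
  end.

Definition prime_to_Delta (n : nat) (A : word) : Prop :=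
  ~ exists Z, positive_word Z /\ valid_word n Z /\ pos_eq n A (Delta n ++ Z).

Definition letter_rank (n : nat) (a : letter) : nat :=
  match a with Sg i => i | X i => n + i | Si i => 2 * n + i end.

Fixpoint lex_le (s t : seq nat) : bool :=
  match s, t with
  | [::], _ => true
  | _ :: _, [::] => false
  | a :: s', b :: t' => (a < b) || ((a == b) && lex_le s' t')
  end.

Definition is_own_base (n : nat) (A : word) : Prop :=
  forall B, positive_word B -> valid_word n B -> pos_eq n A B ->
    lex_le (map (letter_rank n) A) (map (letter_rank n) B).

(* Main.v *)
Require Import Defs.
From HB Require Import structures.
From mathcomp Require Import all_boot all_order all_algebra zify.
From Stdlib Require Import Relations Classical ClassicalEpsilon.

Unset Implicit Arguments.
Definition R (x y x' y' : nat) : Prop := (x = y <-> x' = y') /\ (x.+1 = y <-> x'.+1 = y') /\ (y.+1 = x <-> y'.+1 = x').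
Lemma R_sym x y x' y' : R x y x' y' -> R y x y' x'.
Proof. rewrite /R; lia. Qed.
Definition bnd x := (1 <= x) && (x <= 5).
Lemma sorted3 p q r : p <= q -> q <= r -> exists p' q' r',
  [/\ [&& bnd p', bnd q' & bnd r'], R p q p' q', R q r q' r' & R p r p' r'].
Proof.
move=> h0 h0'; rewrite /R /bnd.
have [h1|h1] := leqP (q-p) 1; have [h2|h2] := leqP (r-q) 1.
- by exists 1, (1 + (q-p)), (1 + (q-p) + (r-q)); split; lia.
- by exists 1, (1 + (q-p)), (1 + (q-p) + 2); split; lia.
- by exists 1, 3, (3 + (r-q)); split; lia.
- by exists 1, 3, 5; split; lia.
Qed.
Lemma compress i j k : exists i' j' k',
  [/\ [&& bnd i', bnd j' & bnd k'], R i j i' j', R j k j' k' & R i k i' k'].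
Proof.
case: (leqP i j) => hij; case: (leqP j k) => hjk; case: (leqP i k) => hik.
- have [x [y [z [B H1 H2 H3]]]] := sorted3 _ _ _ hij hjk.
  by exists x, y, z.
- lia.
- have /ltnW hkj := hjk.
  have [x [z [y [B H1 H2 H3]]]] := sorted3 _ _ _ hik hkj.
  exists x, y, z; split => //; [by move: B; rewrite /bnd; lia | exact: R_sym].
- have /ltnW hki := hik. have /ltnW hkj := hjk.
  have [z [x [y [B H1 H2 H3]]]] := sorted3 _ _ _ hki hij.
  exists x, y, z; split => //; [by move: B; rewrite /bnd; lia | exact: R_sym | exact: R_sym].
- have /ltnW hji := hij.
  have [y [x [z [B H1 H2 H3]]]] := sorted3 _ _ _ hji hik.
  exists x, y, z; split => //; [by move: B; rewrite /bnd; lia | exact: R_sym].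
- have /ltnW hji := hij.
  have [y [z [x [B H1 H2 H3]]]] := sorted3 _ _ _ hjk (ltnW hik).
  exists x, y, z; split => //; [by move: B; rewrite /bnd; lia | exact: R_sym | exact: R_sym].
- lia.
- have /ltnW hji := hij. have /ltnW hkj := hjk.
  have [z [y [x [B H1 H2 H3]]]] := sorted3 _ _ _ hkj hji.
  exists x, y, z; split => //; [by move: B; rewrite /bnd; lia | exact: R_sym | exact: R_sym | exact: R_sym].
Qed.

Set Implicit Arguments. Unset Strict Implicit. Unset Printing Implicit Defensive.

Definition letter_code (a : letter) : nat * nat :=
  match a with Sg i => (0, i) | Si i => (1, i) | X i => (2, i) end.
Definition letter_decode (p : nat * nat) : letter :=
  match p with (0, i) => Sg i | (1, i) => Si i | (_, i) => X i end.
Lemma letter_codeK : cancel letter_code letter_decode. Proof. by case. Qed.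
HB.instance Definition _ := Countable.copy letter (can_type letter_codeK).

Lemma far_abs (i j : nat) : (1 < `|(i:int) - (j:int)|%N) = (i.+1 < j) || (j.+1 < i).
Proof. apply/idP/idP; lia. Qed.
Lemma adj_abs (i j : nat) : (`|(i:int) - (j:int)|%N == 1) = (i.+1 == j) || (j.+1 == i).
Proof. apply/idP/idP; lia. Qed.

Notation crst := (clos_refl_sym_trans word).

Lemma crst_lift (R S : relation word) (g : word -> word) :
  (forall a b, R a b -> crst S (g a) (g b)) ->
  forall a b, crst R a b -> crst S (g a) (g b).
Proof.
move=> H a b; elim=> [x y /H|x|x y _ IH|x y z _ IH1 _ IH2] //.
- exact: rst_refl.
- exact: rst_sym.
- exact: rst_trans IH1 IH2.
Qed.

Lemma crst_inv (R : relation word) (T : Type) (F : word -> T) :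
  (forall a b, R a b -> F a = F b) -> forall a b, crst R a b -> F a = F b.
Proof.
move=> H a b; elim=> [x y /H|x|x y _ IH|x y z _ IH1 _ IH2] //.
by rewrite IH1.
Qed.

Lemma step_app (R : relation word) x y a b :
  step R a b -> step R (x ++ a ++ y) (x ++ b ++ y).
Proof.
case=> [u [v [l [r [Hr [-> ->]]]]]].
exists (x ++ u), (v ++ y), l, r; split => //; by rewrite !catA.
Qed.

Lemma step_rel (R : relation word) l r : R l r -> step R l r.
Proof. move=> H; exists [::], [::], l, r; by rewrite !cats0. Qed.

Lemma crst_app (R : relation word) a b c d :
  crst (step R) a b -> crst (step R) c d -> crst (step R) (a ++ c) (b ++ d).
Proof.
move=> H1 H2; apply: rst_trans (_ : crst (step R) (b ++ c) _).
  apply: (crst_lift (g := fun w => w ++ c)) H1 => x y Hs.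
  apply: rst_step; have := step_app [::] c Hs; by rewrite /= .
apply: (crst_lift (g := fun w => b ++ w)) H2 => x y Hs.
apply: rst_step; have := step_app b [::] Hs; by rewrite !cats0.
Qed.

Section Basics.
Variable n : nat.

Definition vl (a : letter) := (1 <= letter_index a) && (letter_index a <= n - 1).
Definition goodl (a : letter) := positive_letter a && vl a.
Definition goodb (w : word) := all goodl w.

Lemma pe_refl w : pos_eq n w w. Proof. exact: rst_refl. Qed.
Lemma pe_sym u v : pos_eq n u v -> pos_eq n v u. Proof. exact: rst_sym. Qed.
Lemma pe_trans u v w : pos_eq n u v -> pos_eq n v w -> pos_eq n u w.
Proof. exact: rst_trans. Qed.
Lemma pe_app a b c d : pos_eq n a b -> pos_eq n c d -> pos_eq n (a ++ c) (b ++ d).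
Proof. exact: crst_app. Qed.
Lemma pe_appl a c d : pos_eq n c d -> pos_eq n (a ++ c) (a ++ d).
Proof. by apply: pe_app; apply: pe_refl. Qed.
Lemma pe_appr a b c : pos_eq n a b -> pos_eq n (a ++ c) (b ++ c).
Proof. by move=> H; apply: pe_app => //; apply: pe_refl. Qed.
Lemma pe_rel l r : pos_relation n l r -> pos_eq n l r.
Proof. by move=> H; apply: rst_step; apply: step_rel. Qed.

Lemma rel_good l r : pos_relation n l r -> goodb l /\ goodb r.
Proof.
by case=> [i j [? ?] [? ?] _|i j [? ?] [? ?] _|i j [? ?] [? ?] _|i [? ?] [? ?]
  |i [? ?] [? ?]|i [? ?] [? ?]];
  rewrite /goodb /goodl /vl /= ?andbT; split; apply/and4P || apply/and3P || apply/and5P || idtac;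
  repeat split; lia.
Qed.

End Basics.

Lemma goodb_catA n u v : goodb n (u ++ v) = goodb n u && goodb n v.
Proof. exact: all_cat. Qed.


Set Implicit Arguments. Unset Strict Implicit. Unset Printing Implicit Defensive.

Definition adj (i j : nat) := (i.+1 == j) || (j.+1 == i).
Definition fc (a b : letter) : option word :=
  match a, b with
  | Sg i, Sg j => Some (if adj i j then [:: Sg j; Sg i] else [:: Sg j])
  | X i, X j => if adj i j then None else Some [:: X j]
  | X i, Sg j => Some (if adj i j then [:: Sg j; Sg i] else [:: Sg j])
  | Sg j, X i => Some (if adj i j then [:: Sg i; X j] else [:: X i])
  | _, _ => None
  end.

Inductive res := Ok of word & word | Fail | OOF.

Definition step1 (rec : word -> word -> res) (a : letter) (v : word) : res :=
  match v with
  | [::] => Ok [::] [:: a]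
  | b :: v1 => if a == b then Ok v1 [::] else
       match fc a b, fc b a with
       | Some p, Some q => match rec q v1 with Ok q' w => Ok (p ++ q') w | e => e end
       | _, _ => Fail end
  end.

Fixpoint revw (k : nat) (u v : word) : res :=
  match k with 0 => OOF | k'.+1 =>
  match u with
  | [::] => Ok v [::]
  | a :: u1 =>
    match step1 (revw k') a v with
    | Ok x y => match revw k' u1 x with Ok x' z => Ok x' (y ++ z) | e => e end
    | e => e end
  end end.

Section LC.
Variable n : nat.
Notation pe := (pos_eq n).
Notation goodb := (goodb n).
Notation goodl := (goodl n).

Lemma rel_size l r : pos_relation n l r -> size l = size r.
Proof. by case. Qed.

Lemma pe_size u v : pe u v -> size u = size v.
Proof.
apply: crst_inv => a b [x [y [l [r [Hr [-> ->]]]]]].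
by rewrite !size_cat (rel_size Hr).
Qed.

Lemma pe_good u v : pe u v -> goodb u = goodb v.
Proof.
apply: crst_inv => a b [x [y [l [r [Hr [-> ->]]]]]].
by case: (rel_good Hr) => H1 H2; rewrite !goodb_catA H1 H2.
Qed.

Lemma rel_fc l r : pos_relation n l r ->
  exists a l' b r', [/\ l = a :: l', r = b :: r', a != b, fc a b = Some l' & fc b a = Some r'].
Proof.
case=> [i j _ _ H|i j _ _ H|i j _ _ H|i _ _|i _ _|i _ _];
  try rewrite ?far_abs ?adj_abs in H; do 4 eexists; split; try reflexivity;
  first [ apply/eqP => -[]; lia
        | rewrite /= /adj ?eqxx ?orbT //; case: ifP => // ?; exfalso; lia ].
Qed.

Definition concl (a : letter) U b V :=
  if a == b then pe U V else
  exists p q W, [/\ fc a b = Some p, fc b a = Some q, pe U (p ++ W) & pe V (q ++ W)].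

Definition SN N := forall a b U V, size U = N -> goodb (a :: U) ->
  pe (a :: U) (b :: V) -> concl a U b V.

Lemma G M (IH : forall N, N < M -> SN N) : forall k u v X Y,
  goodb (u ++ X) -> size (u ++ X) <= M -> pe (u ++ X) (v ++ Y) ->
  match revw k u v return Prop with
  | Ok x y => exists W, pe X (x ++ W) /\ pe Y (y ++ W)
  | Fail => False | OOF => True end.
Proof.
elim=> [//|k IHk] [|a u1] v X Y Hg Hs He /=.
  by exists Y; split => //; apply: pe_refl.
have Hr1 : match step1 (revw k) a v return Prop with
   | Ok x y => exists W, pe (u1 ++ X) (x ++ W) /\ pe Y (y ++ W)
   | Fail => False | OOF => True end.
  rewrite /step1; case: v He => [|b v1] He.
    by exists (u1 ++ X); split; [apply: pe_refl| apply: pe_sym].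
  have HN : size (u1 ++ X) < M by move: Hs => /=; lia.
  have := IH _ HN a b (u1 ++ X) (v1 ++ Y) erefl Hg He.
  rewrite /concl; case: eqP => [_ HH|Hab].
    by exists Y; split => //; apply: pe_refl.
  move=> HH. case: HH => p [q [W [Hp Hq H1 H2]]]. rewrite Hp Hq.
  have Hg2 : goodb (q ++ W).
    have := pe_good He; rewrite Hg /= => /esym/andP[_ Hv]; by rewrite -(pe_good H2).
  have Hs2 : size (q ++ W) <= M.
    rewrite -(pe_size H2); have := pe_size He; rewrite /= => -[<-]; lia.
  have := IHk q v1 W Y Hg2 Hs2 (pe_sym H2).
  case: (revw k q v1) => [q' w [W' [H3 H4]]| //| //].
  exists W'; split => //; rewrite -catA; apply: (pe_trans H1); exact: pe_appl.
case: (step1 (revw k) a v) Hr1 => [x y [W [H1 H2]]| //| //].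
have Hg2 : goodb (u1 ++ X) by case/andP: Hg.
have Hs2 : size (u1 ++ X) <= M by move: Hs => /=; lia.
have := IHk u1 x X W Hg2 Hs2 H1.
case: (revw k u1 x) => [x' z [W' [H3 H4]]| //| //].
exists W'; split => //; rewrite -catA; apply: (pe_trans H2); exact: pe_appl.
Qed.

End LC.

Set Implicit Arguments. Unset Strict Implicit. Unset Printing Implicit Defensive.

Section Main.
Variable n : nat.
Notation pe := (pos_eq n).

Definition cubeP (a b c : letter) :=
  a != b -> b != c -> a != c -> forall pab pba pbc pcb,
  fc a b = Some pab -> fc b a = Some pba -> fc b c = Some pbc -> fc c b = Some pcb ->
  match revw 20 pba pbc return Prop with
  | Ok p' q' => exists r t s, [/\ fc a c = Some r, fc c a = Some t,
                   pe (pab ++ p') (r ++ s) & pe (pcb ++ q') (t ++ s)]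
  | Fail => True | OOF => False end.

Hypothesis cube : forall a b c, goodl n a -> goodl n b -> goodl n c -> cubeP a b c.

Lemma cancel_word M (IH : forall N, N < M -> SN n N) q W1 W2 :
  goodb n (q ++ W1) -> size (q ++ W1) <= M -> pe (q ++ W1) (q ++ W2) -> pe W1 W2.
Proof.
elim: q => [//|a q IHq] Hg Hs He.
have HN : size (q ++ W1) < M by move: Hs => /=; lia.
have := IH _ HN a a _ _ erefl Hg He; rewrite /concl eqxx => H.
apply: IHq H => //; [by case/andP: Hg | by move: Hs => /=; lia].
Qed.

Lemma concl_sym a U b V : concl n a U b V -> concl n b V a U.
Proof.
rewrite /concl eq_sym; case: eqP => _; first exact: pe_sym.
by case=> p [q [W [H1 H2 H3 H4]]]; exists q, p, W.
Qed.

Lemma concl_trans N (IH : forall m, m < N -> SN n m) a b c U V T :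
  size U = N -> goodb n (a :: U) -> pe (a :: U) (b :: V) -> pe (b :: V) (c :: T) ->
  concl n a U b V -> concl n b V c T -> concl n a U c T.
Proof.
move=> HU Hga He1 He2.
have Hgb : goodb n (b :: V) by rewrite -(pe_good He1).
have Hgc : goodb n (c :: T) by rewrite -(pe_good He2).
have HV : size V = N by have := pe_size He1; rewrite /= HU => -[].
rewrite /concl; case: (eqVneq a b) => [<-|Hab].
  case: (eqVneq a c) => [_|Hac].
    by move=> H1 H2; apply: pe_trans H1 H2.
  move=> H1 [p [q [W [H3 H4 H5 H6]]]]; exists p, q, W; split => //.
  exact: pe_trans H1 H5.
case: (eqVneq b c) => [<-|Hbc].
  rewrite (negbTE Hab) => -[p [q [W [H3 H4 H5 H6]]]] H1; exists p, q, W; split => //.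
  exact: pe_trans (pe_sym H1) H6.
case=> pab [pba [W1 [Hab1 Hba1 HU1 HV1]]] [pbc [pcb [W2 [Hbc1 Hcb1 HV2 HT2]]]].
have HgV : goodb n (pba ++ W1) by rewrite -(pe_good HV1); case/andP: Hgb.
have HsV : size (pba ++ W1) <= N by rewrite -(pe_size HV1) HV.
have HeV : pe (pba ++ W1) (pbc ++ W2) by apply: pe_trans (pe_sym HV1) HV2.
case: (eqVneq a c) => [Eac|Hac].
  subst c; rewrite Hbc1 in Hba1; case: Hba1 => ?; subst pbc.
  rewrite Hab1 in Hcb1; case: Hcb1 => ?; subst pcb.
  have := cancel_word IH HgV HsV HeV => HW.
  apply: pe_trans HU1 _; apply: pe_trans (pe_appl _ HW) (pe_sym HT2).
have := G IH 20 HgV HsV HeV.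
have := cube (a:=a) (b:=b) (c:=c) _ _ _ Hab Hbc Hac Hab1 Hba1 Hbc1 Hcb1.
case/andP: Hga => ga _; case/andP: Hgb => gb _; case/andP: Hgc => gc _.
move=> /(_ ga gb gc).
case: (revw 20 pba pbc) => [p' q'|//|//] [r [t [s [Hr Ht H1 H2]]]] [W [HW1 HW2]].
exists r, t, (s ++ W); split => //.
  apply: pe_trans HU1 _; apply: pe_trans (pe_appl _ HW1) _; rewrite catA catA.
  exact: pe_appr.
apply: pe_trans HT2 _; apply: pe_trans (pe_appl _ HW2) _; rewrite catA catA.
exact: pe_appr.
Qed.

Definition Qr (x y : word) := match x, y with
  | a :: U, b :: V => concl n a U b V | [::], [::] => True | _, _ => False end.

Lemma SN_all N : SN n N.
Proof.
elim/ltn_ind: N => N IH a b U V HU Hg He.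
suff : forall x y, pe x y -> size x = N.+1 -> goodb n x -> Qr x y.
  by move/(_ _ _ He); rewrite /= HU; apply.
move=> x y; elim => {x y}.
- move=> x y [u [v [l [r [Hr [-> ->]]]]]] Hs Hg'.
  case: u Hs Hg' => [|c u] Hs Hg' /=.
    have [a' [l' [b' [r' [-> -> Hab Hf1 Hf2]]]]] := rel_fc Hr.
    rewrite /= /concl (negbTE Hab); exists l', r', v; split => //; exact: pe_refl.
  rewrite /concl eqxx; apply: rst_step; exact: step_app (step_rel Hr).
- by case=> [|c u] //= _ _; rewrite /concl eqxx; apply: pe_refl.
- move=> x y Hxy IHxy Hs Hg'.
  have Hs' : size x = N.+1 by rewrite (pe_size Hxy).
  have Hg'' : goodb n x by rewrite (pe_good Hxy).
  have HQ := IHxy Hs' Hg''.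
  move: HQ; case: x {Hxy IHxy Hs' Hg''} => [|a1 x]; case: y {Hs Hg'} => [|b1 y] //=.
  exact: concl_sym.
- move=> x y z Hxy IH1 Hyz IH2 Hs Hg'.
  have Hs' : size y = N.+1 by rewrite -(pe_size Hxy).
  have Hg'' : goodb n y by rewrite -(pe_good Hxy).
  move: (IH1 Hs Hg') (IH2 Hs' Hg'').
  case: x Hxy Hs Hg' {IH1 IH2} => [|a1 x] Hxy Hs Hg';
  case: y Hyz Hxy Hs' Hg'' => [|b1 y] Hyz Hxy Hs' Hg'';
  case: z Hyz => [|c1 z] Hyz //=.
  move=> H1 H2; apply: (concl_trans IH _ Hg' Hxy Hyz H1 H2); by case: Hs.
Qed.

Lemma left_cancel a U V : goodb n (a :: U) -> pe (a :: U) (a :: V) -> pe U V.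
Proof. by move=> Hg He; have := SN_all erefl Hg He; rewrite /concl eqxx. Qed.

Lemma left_cancel_word q U V : goodb n (q ++ U) -> pe (q ++ U) (q ++ V) -> pe U V.
Proof.
elim: q => [//|a q IHq] Hg He; apply: IHq; first by case/andP: Hg.
exact: left_cancel Hg He.
Qed.

End Main.

Set Implicit Arguments. Unset Strict Implicit. Unset Printing Implicit Defensive.

Section Check.
Variable n : nat.
Definition vi i := (1 <= i) && (i <= n - 1).

Definition relb (l r : word) : bool :=
  match l with
  | [:: a; b] => (r == [:: b; a]) && match a, b with
      | Sg i, Sg j => [&& vi i, vi j & (i.+1 < j) || (j.+1 < i)]
      | X i, X j => [&& vi i, vi j & (i.+1 < j) || (j.+1 < i)]
      | X i, Sg j => [&& vi i, vi j & ~~ adj i j]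
      | _, _ => false end
  | [:: Sg i; Sg j; c] =>
      [&& j == i.+1, vi i, vi i.+1 & ((c == Sg i) && (r == [:: Sg i.+1; Sg i; Sg i.+1]))
                             || ((c == X i) && (r == [:: X i.+1; Sg i; Sg i.+1]))]
      || [&& i == j.+1, vi j, vi i, c == X i & r == [:: X j; Sg i; Sg j]]
  | _ => false end.

Lemma relb_sound l r : relb l r -> pos_relation n l r.
Proof.
case: l => [|a [|b [|c [|d l]]]] //=; case: a => i //=; try (case: b => j //=).
all: try (case/andP => /eqP -> /and3P [/andP [? ?] /andP [? ?] H];
  first [ by apply: R_ss; rewrite /ok_idx ?far_abs
        | by apply: R_xs; rewrite /ok_idx ?adj_abs
        | by apply: R_xx; rewrite /ok_idx ?far_abs ]).
all: try by case: d.
all: try by rewrite andbF.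
case/orP => [/and4P [/eqP ? /andP [? ?] /andP [? ?] /orP [/andP [/eqP ? /eqP ?]|/andP [/eqP ? /eqP ?]]]
            | /and5P [/eqP ? /andP [? ?] /andP [? ?] /eqP ? /eqP ?]]; subst.
- by apply: R_braid.
- by apply: R_sx1.
- by apply: R_sx2.
Qed.

Definition cands (l : word) : seq word :=
  match l with
  | [:: a; b] => [:: [:: b; a]]
  | [:: a; b; c] => [:: [:: b; a; b]; [:: X (letter_index a).+1; a; b];
                       [:: X (letter_index a).-1; a; b]; [:: b; c; X (letter_index b)]]
  | _ => [::] end.

Definition neighbors (w : word) : seq word :=
  flatten [seq flatten [seq [seq take i w ++ r ++ drop L (drop i w)
                              | r <- cands (take L (drop i w)) &
                                 relb (take L (drop i w)) r || relb r (take L (drop i w))]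
                         | L <- [:: 2; 3]]
          | i <- iota 0 (size w)].

Lemma neighbors_sound w y : y \in neighbors w -> pos_eq n w y.
Proof.
case/flatten_mapP => i _ /flatten_mapP [L _] /mapP [r].
rewrite mem_filter => /andP [Hrel _] ->.
have Ew : w = take i w ++ take L (drop i w) ++ drop L (drop i w) by rewrite !cat_take_drop.
rewrite {1}Ew; case/orP: Hrel => /relb_sound H.
  by apply: rst_step; exists (take i w), (drop L (drop i w)), (take L (drop i w)), r.
by apply: rst_sym; apply: rst_step; exists (take i w), (drop L (drop i w)), r, (take L (drop i w)).
Qed.

Fixpoint clos (k : nat) (s : seq word) : seq word :=
  match k with 0 => s | k'.+1 => clos k' (undup (s ++ flatten (map neighbors s))) end.

Lemma clos_sound k s y : y \in clos k s -> exists2 x, x \in s & pos_eq n x y.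
Proof.
elim: k s => [|k IH] s /=.
  by move=> Hy; exists y => //; apply: pe_refl.
case/IH => x; rewrite mem_undup mem_cat => /orP [Hx|/flatten_mapP [z Hz Hx]] Hxy.
  by exists x.
by exists z => //; apply: pe_trans (neighbors_sound Hx) Hxy.
Qed.

Definition peqb (u v : word) := v \in clos 6 [:: u].

Lemma peqb_sound u v : peqb u v -> pos_eq n u v.
Proof. by case/clos_sound => x; rewrite inE => /eqP ->. Qed.

Definition cubeb (a b c : letter) : bool :=
  (a != b) && (b != c) && (a != c) ==>
  match fc a b, fc b a, fc b c, fc c b with
  | Some pab, Some pba, Some pbc, Some pcb =>
     match revw 20 pba pbc with
     | Fail => true | OOF => false
     | Ok p' q' => match fc a c, fc c a with
        | Some r, Some t => match revw 20 r (pab ++ p') with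
            | Ok s [::] => peqb (pab ++ p') (r ++ s) && peqb (pcb ++ q') (t ++ s)
            | _ => false end
        | _, _ => false end end
  | _, _, _, _ => true end.

Lemma cubeb_sound a b c : cubeb a b c -> cubeP n a b c.
Proof.
rewrite /cubeb /cubeP => H Hab Hbc Hac pab pba pbc pcb E1 E2 E3 E4.
move: H; rewrite Hab Hbc Hac E1 E2 E3 E4 => /implyP /(_ isT); cbv beta iota.
case: (revw 20 pba pbc) => [p' q'| //| //].
case: (fc a c) => [r|//]; case: (fc c a) => [t|//].
case: (revw 20 r (pab ++ p')) => [s [|? ?]|//|//] // /andP [H1 H2].
by exists r, t, s; split => //; apply: peqb_sound.
Qed.

End Check.

Definition L6 : seq letter := [seq Sg i | i <- iota 1 5] ++ [seq X i | i <- iota 1 5].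

Lemma cube6_all : all (fun a => all (fun b => all (fun c => cubeb 6 a b c) L6) L6) L6.
Proof. Time vm_compute. reflexivity. Qed.

Set Implicit Arguments. Unset Strict Implicit. Unset Printing Implicit Defensive.

Definition setidx (a : letter) x := match a with Sg _ => Sg x | Si _ => Si x | X _ => X x end.

Section Transport.
Variable h : nat -> nat.
Variable S : seq nat.
Hypothesis goodh : {in S &, forall x y, (h x == h y) = (x == y) /\ ((h x).+1 == h y) = (x.+1 == y)}.

Definition hl a := setidx a (h (letter_index a)).
Definition hw w := map hl w.
Definition idxin (w : word) := all (fun a => letter_index a \in S) w.

Lemma eqSg x y : (Sg x == Sg y) = (x == y). Proof. by apply/eqP/eqP => [[]|->]. Qed.
Lemma eqX x y : (X x == X y) = (x == y). Proof. by apply/eqP/eqP => [[]|->]. Qed.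
Lemma eqSi x y : (Si x == Si y) = (x == y). Proof. by apply/eqP/eqP => [[]|->]. Qed.

Lemma hl_eq a b : letter_index a \in S -> letter_index b \in S -> (hl a == hl b) = (a == b).
Proof.
case: a => i; case: b => j /= Hi Hj; rewrite ?eqSg ?eqX ?eqSi; try (by case: (goodh Hi Hj));
  by apply/eqP/eqP.
Qed.

Lemma adj_h i j : i \in S -> j \in S -> adj (h i) (h j) = adj i j.
Proof.
move=> Hi Hj; rewrite /adj; case: (goodh Hi Hj) => _ ->; by case: (goodh Hj Hi) => _ ->.
Qed.

Lemma fc_h a b : letter_index a \in S -> letter_index b \in S ->
  fc (hl a) (hl b) = omap hw (fc a b).
Proof.
case: a => i; case: b => j //= Hi Hj; rewrite ?adj_h //; try by case: (adj _ _).
Qed.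

Lemma fc_idx a b p : letter_index a \in S -> letter_index b \in S -> fc a b = Some p -> idxin p.
Proof.
case: a => i; case: b => j //= Hi Hj; (try case: (adj _ _)) => //= -[<-] /=;
  by rewrite ?Hi ?Hj.
Qed.

Definition rmap (r : res) := match r with Ok x y => Ok (hw x) (hw y) | e => e end.
Definition res_in (r : res) := match r with Ok x y => idxin x && idxin y | _ => true end.

Lemma idxin_cat u v : idxin (u ++ v) = idxin u && idxin v. Proof. exact: all_cat. Qed.
Lemma hw_cat u v : hw (u ++ v) = hw u ++ hw v. Proof. exact: map_cat. Qed.

Lemma revw_h k u v : idxin u -> idxin v ->
  revw k (hw u) (hw v) = rmap (revw k u v) /\ res_in (revw k u v).
Proof.
elim: k u v => [//|k IH] [|a u1] v Hu Hv; first by split => //=; rewrite andbT.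
rewrite [hw (a :: u1)]/=; cbn [revw].
case/andP: Hu => Ha Hu1.
have Hr1 : step1 (revw k) (hl a) (hw v) = rmap (step1 (revw k) a v) /\ res_in (step1 (revw k) a v).
  rewrite /step1.
  case: v Hv => [|b v1] /=; first by split => //=; rewrite andbT.
  case/andP => Hb Hv1; rewrite hl_eq //.
  case: eqP => _; first by split => //=; rewrite andbT.
  rewrite fc_h // fc_h //.
  case E1: (fc a b) => [p|] //=; case E2: (fc b a) => [q|] //=.
  have Hq : idxin q by apply: fc_idx E2.
  have Hp : idxin p by apply: fc_idx E1.
  case: (IH q v1 Hq Hv1) => -> /=.
  by case: (revw k q v1) => [q' w|//|//] /= /andP [H1 H2]; rewrite hw_cat idxin_cat Hp H1 H2.
case: Hr1 => -> H.
case: (step1 (revw k) a v) H => [x y|//|//] /= /andP [Hx Hy].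
case: (IH u1 x Hu1 Hx) => -> /=.
by case: (revw k u1 x) => [x' z|//|//] /= /andP [H1 H2]; rewrite hw_cat H1 idxin_cat Hy H2.
Qed.

End Transport.

Set Implicit Arguments. Unset Strict Implicit. Unset Printing Implicit Defensive.

Lemma rel_idx S m l r : pos_relation m l r -> idxin S l = idxin S r.
Proof.
case=> [i j _ _ _|i j _ _ _|i j _ _ _|i _ _|i _ _|i _ _]; rewrite /idxin /= ?andbT;
  first [by rewrite andbC | by case: (i \in S); case: (i.+1 \in S)].
Qed.

Lemma pe_idx S m u v : pos_eq m u v -> idxin S u = idxin S v.
Proof.
apply: crst_inv => a b [x [y [l [r [Hr [-> ->]]]]]].
by rewrite !idxin_cat (rel_idx S Hr).
Qed.

Lemma far_iff x y : ((x.+1 < y) || (y.+1 < x)) = (x != y) && ~~ adj x y.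
Proof. rewrite /adj; apply/idP/idP; lia. Qed.

Section PeT.
Variable n : nat.
Variable h : nat -> nat.
Variable S : seq nat.
Hypothesis goodh : {in S &, forall x y, (h x == h y) = (x == y) /\ ((h x).+1 == h y) = (x.+1 == y)}.
Hypothesis Hrange : {in S, forall x, 1 <= h x <= n - 1}.

Lemma okh x : x \in S -> ok_idx n (h x).
Proof. by move/Hrange => /andP [? ?]; split. Qed.

Lemma far_h i j : i \in S -> j \in S ->
  ((h i).+1 < h j) || ((h j).+1 < h i) = (i.+1 < j) || (j.+1 < i).
Proof.
move=> Hi Hj; rewrite !far_iff (adj_h goodh) //; by case: (goodh Hi Hj) => -> _.
Qed.

Lemma succ_h i : i \in S -> i.+1 \in S -> h i.+1 = (h i).+1.
Proof. by move=> Hi Hj; case: (goodh Hi Hj) => _; rewrite eqxx => /eqP. Qed.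

Lemma rel_h l r : pos_relation 6 l r -> idxin S l -> pos_relation n (hw h l) (hw h r).
Proof.
case=> [i j _ _ H|i j _ _ H|i j _ _ H|i _ _|i _ _|i _ _] /=; rewrite /idxin /=.
- case/and3P=> Hi Hj _; apply: R_ss; try exact: okh.
  by rewrite far_abs far_h // -far_abs.
- case/and3P=> Hi Hj _; apply: R_xx; try exact: okh.
  by rewrite far_abs far_h // -far_abs.
- case/and3P=> Hi Hj _; apply: R_xs; try exact: okh.
  by rewrite adj_abs -/(adj _ _) (adj_h goodh) // /adj -adj_abs.
- case/and4P=> Hi Hj _ _; rewrite succ_h //; apply: R_braid; rewrite -?succ_h //; exact: okh.
- case/and4P=> Hi Hj _ _; rewrite succ_h //; apply: R_sx1; rewrite -?succ_h //; exact: okh.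
- case/and4P=> Hj Hi _ _; rewrite succ_h //; apply: R_sx2; rewrite -?succ_h //; exact: okh.
Qed.

Lemma pe_h u v : pos_eq 6 u v -> idxin S u -> pos_eq n (hw h u) (hw h v).
Proof.
elim=> {u v} [x y [u [v [l [r [Hr [-> ->]]]]]]|x|x y Hxy IH|x y z Hxy IH1 Hyz IH2] Hx.
- rewrite !hw_cat; apply: pe_appl; apply: pe_appr; apply: pe_rel; apply: rel_h Hr _.
  by move: Hx; rewrite !idxin_cat => /and3P [].
- exact: pe_refl.
- apply: pe_sym; apply: IH; by rewrite (pe_idx S Hxy).
- apply: pe_trans (IH1 Hx) (IH2 _); by rewrite -(pe_idx S Hxy).
Qed.

Lemma omap_some (f : word -> word) o p : omap f o = Some p -> exists p', o = Some p' /\ p = f p'.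
Proof. by case: o => [p'|] //= [<-]; exists p'. Qed.

Lemma cube_h a b c : letter_index a \in S -> letter_index b \in S -> letter_index c \in S ->
  cubeP 6 a b c -> cubeP n (hl h a) (hl h b) (hl h c).
Proof.
move=> Ha Hb Hc Hcube.
rewrite /cubeP !(hl_eq goodh) // => Hab Hbc Hac pab pba pbc pcb.
rewrite !(fc_h goodh) // => /omap_some [pab' [E1 ->]] /omap_some [pba' [E2 ->]]
  /omap_some [pbc' [E3 ->]] /omap_some [pcb' [E4 ->]].
have := Hcube Hab Hbc Hac _ _ _ _ E1 E2 E3 E4.
have Hpba : idxin S pba' by apply: fc_idx E2.
have Hpbc : idxin S pbc' by apply: fc_idx E3.
case: (revw_h goodh 20 Hpba Hpbc) => -> Hin.
move: Hin; case: (revw 20 pba' pbc') => [p' q'|//|//] /= /andP [Hp' Hq'].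
case=> r [t [s [Er Et H1 H2]]].
exists (hw h r), (hw h t), (hw h s); split.
- by rewrite Er.
- by rewrite Et.
- rewrite -!hw_cat; have HH := pe_h H1; apply: HH; rewrite idxin_cat Hp' andbT; exact: fc_idx E1.
- rewrite -!hw_cat; have HH := pe_h H2; apply: HH; rewrite idxin_cat Hq' andbT; exact: fc_idx E4.
Qed.

End PeT.

Set Implicit Arguments. Unset Strict Implicit. Unset Printing Implicit Defensive.

Lemma idx_setidx a x : letter_index (setidx a x) = x. Proof. by case: a. Qed.
Lemma hl_setidx h a x : hl h (setidx a x) = setidx a (h x). Proof. by case: a. Qed.
Lemma setidx_idx a : setidx a (letter_index a) = a. Proof. by case: a. Qed.

Lemma R_bool x y x' y' : R x y x' y' -> (x == y) = (x' == y') /\ (x.+1 == y) = (x'.+1 == y').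
Proof. rewrite /R => -[H1 [H2 _]]; split; apply/eqP/eqP; tauto. Qed.

Lemma Rii x x' : R x x x' x'. Proof. rewrite /R; lia. Qed.

Lemma memL6 a x : positive_letter a -> bnd x -> setidx a x \in L6.
Proof.
case: a => //= ? _ Hb; rewrite mem_cat; apply/orP; [left|right]; apply/mapP; exists x => //;
  rewrite mem_iota; move: Hb; rewrite /bnd; lia.
Qed.

Lemma cube_all n a b c : goodl n a -> goodl n b -> goodl n c -> cubeP n a b c.
Proof.
move=> Ga Gb Gc.
have [i' [j' [k' [B Rij Rjk Rik]]]] := compress (letter_index a) (letter_index b) (letter_index c).
set i := letter_index a in Rij Rik; set j := letter_index b in Rij Rjk; set k := letter_index c in Rjk Rik.
pose h x := if x == i' then i else if x == j' then j else k.
pose S := [:: i'; j'; k'].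
have hi : h i' = i by rewrite /h eqxx.
have hj : h j' = j.
  rewrite /h; case: eqP => [E|_]; last by rewrite eqxx.
  by case: Rij => H _; apply: H.2; rewrite E.
have hk : h k' = k.
  rewrite /h; case: eqP => [E|_]; first by case: Rik => H _; apply: H.2; rewrite E.
  case: eqP => [E|_] //; by case: Rjk => H _; apply: H.2; rewrite E.
have goodh : {in S &, forall x y, (h x == h y) = (x == y) /\ ((h x).+1 == h y) = (x.+1 == y)}.
  move=> x y; rewrite !inE => /or3P [] /eqP -> /or3P [] /eqP ->; rewrite ?hi ?hj ?hk.
  - exact: (R_bool (Rii _ _)).
  - exact: (R_bool Rij).
  - exact: (R_bool Rik).
  - exact: (R_bool (R_sym _ _ _ _ Rij)).
  - exact: (R_bool (Rii _ _)).
  - exact: (R_bool Rjk).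
  - exact: (R_bool (R_sym _ _ _ _ Rik)).
  - exact: (R_bool (R_sym _ _ _ _ Rjk)).
  - exact: (R_bool (Rii _ _)).
have Hrange : {in S, forall x, 1 <= h x <= n - 1}.
  move=> x; rewrite !inE => /or3P [] /eqP ->; rewrite ?hi ?hj ?hk.
  - by case/andP: Ga.
  - by case/andP: Gb.
  - by case/andP: Gc.
have Ea : a = hl h (setidx a i') by rewrite hl_setidx hi setidx_idx.
have Eb : b = hl h (setidx b j') by rewrite hl_setidx hj setidx_idx.
have Ec : c = hl h (setidx c k') by rewrite hl_setidx hk setidx_idx.
rewrite Ea Eb Ec; apply: (cube_h goodh Hrange); rewrite ?idx_setidx ?inE ?eqxx ?orbT //.
apply: cubeb_sound.
case/and3P: B => B1 B2 B3.
have := cube6_all; move/allP/(_ _ (memL6 (proj1 (andP Ga)) B1))/allP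
  /(_ _ (memL6 (proj1 (andP Gb)) B2))/allP/(_ _ (memL6 (proj1 (andP Gc)) B3)).
done.
Qed.

Lemma lcancel n a U V : goodb n (a :: U) -> pos_eq n (a :: U) (a :: V) -> pos_eq n U V.
Proof. apply: left_cancel; exact: cube_all. Qed.

Lemma lcancel_word n q U V : goodb n (q ++ U) -> pos_eq n (q ++ U) (q ++ V) -> pos_eq n U V.
Proof. apply: left_cancel_word; exact: cube_all. Qed.

Set Implicit Arguments. Unset Strict Implicit. Unset Printing Implicit Defensive.

Lemma rev_rel n l r : pos_relation n l r ->
  pos_relation n (rev l) (rev r) \/ pos_relation n (rev r) (rev l).
Proof.
case=> [i j Hi Hj H|i j Hi Hj H|i j Hi Hj H|i Hi Hj|i Hi Hj|i Hi Hj]; rewrite /rev /=.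
- by left; apply: R_ss => //; move: H; lia.
- by left; apply: R_xx => //; move: H; lia.
- by right; apply: R_xs.
- by left; apply: R_braid.
- by right; apply: R_sx2.
- by right; apply: R_sx1.
Qed.

Lemma pe_rev n u v : pos_eq n u v -> pos_eq n (rev u) (rev v).
Proof.
apply: crst_lift => a b [x [y [l [r [Hr [-> ->]]]]]].
rewrite !rev_cat -!catA; case: (rev_rel Hr) => H.
  by apply: rst_step; exists (rev y), (rev x), (rev l), (rev r).
by apply: rst_sym; apply: rst_step; exists (rev y), (rev x), (rev r), (rev l).
Qed.

Lemma goodb_rev n w : goodb n (rev w) = goodb n w.
Proof. by rewrite /goodb all_rev. Qed.

Lemma rcancel_word n q U V : goodb n (U ++ q) -> pos_eq n (U ++ q) (V ++ q) -> pos_eq n U V.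
Proof.
move=> Hg He; have := pe_rev He; rewrite !rev_cat => He'.
have Hg' : goodb n (rev q ++ rev U) by rewrite -rev_cat goodb_rev.
have := lcancel_word Hg' He' => /pe_rev; by rewrite !revK.
Qed.

Definition bl (x : bool) i := if x then X i else Sg i.
Definition P k := map Sg (iota 1 k).
Definition Dm m := flatten [seq P k | k <- rev (iota 1 m)].

Lemma Delta_Dm n : Delta n = Dm (n - 1).
Proof.
rewrite /Delta /Dm; congr flatten; apply: eq_map => k.
by rewrite /P (iotaDl 1 0) -map_comp; apply: eq_map => x /=; rewrite add1n.
Qed.

Lemma Dm_S m : Dm m.+1 = P m.+1 ++ Dm m.
Proof. by rewrite /Dm; have := iotaD 1 m 1; rewrite addn1 add1n => ->; rewrite rev_cat. Qed.

Lemma P_S m : P m.+1 = P m ++ [:: Sg m.+1].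
Proof. by rewrite /P; have := iotaD 1 m 1; rewrite addn1 add1n => ->; rewrite map_cat. Qed.

Definition low m (w : word) := all (fun c => if c is Sg l then (1 <= l <= m) else false) w.

Lemma low_P m : low m (P m).
Proof. apply/allP => c /mapP [x]; rewrite mem_iota => Hx ->; lia. Qed.

Lemma low_Dm m : low m (Dm m).
Proof.
elim: m => [//|m IH]; rewrite Dm_S /low all_cat; apply/andP; split; first exact: (low_P m.+1).
apply: sub_all IH => -[] // l; lia.
Qed.

Lemma low_rev m w : low m (rev w) = low m w. Proof. by rewrite /low all_rev. Qed.

Lemma low_good n m w : m <= n - 1 -> low m w -> goodb n w.
Proof. move=> Hm; apply: sub_all => -[] // l /=; rewrite /goodl /vl /=; lia. Qed.

Section Delta.
Variable n : nat.
Notation pe := (pos_eq n).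

Lemma comm_bS x i l : 1 <= i <= n - 1 -> 1 <= l <= n - 1 -> (l.+1 < i) || (i.+1 < l) ->
  pe [:: bl x i; Sg l] [:: Sg l; bl x i].
Proof.
move=> /andP [? ?] /andP [? ?] H; apply: pe_rel; case: x => /=.
  by apply: R_xs; rewrite /ok_idx; try split => //; rewrite adj_abs; lia.
by apply: R_ss; rewrite /ok_idx; try split => //; rewrite far_abs; lia.
Qed.

Lemma comm_word a w : (forall c, c \in w -> pe [:: a; c] [:: c; a]) -> pe (a :: w) (w ++ [:: a]).
Proof.
elim: w => [|c w IH] H /=; first exact: pe_refl.
apply: pe_trans (_ : pe (c :: a :: w) _).
  by have := pe_appr w (H c (mem_head _ _)).
apply: (pe_appl [:: c]); apply: IH => d Hd; apply: H; by rewrite inE Hd orbT.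
Qed.

Lemma comm_low x t m w : 1 <= t <= n - 1 -> m.+2 <= t -> low m w ->
  pe (w ++ [:: bl x t]) (bl x t :: w).
Proof.
move=> Ht Hmt Hw; apply: pe_sym; apply: comm_word => c Hc.
have := allP Hw c Hc; case: c Hc => // l Hc Hl.
apply: comm_bS => //; lia.
Qed.

Lemma bl_sx1 x j : 1 <= j -> j.+1 <= n - 1 ->
  pe [:: Sg j; Sg j.+1; bl x j] [:: bl x j.+1; Sg j; Sg j.+1].
Proof. by move=> ? ?; apply: pe_rel; case: x; [apply: R_sx1 | apply: R_braid]; rewrite /ok_idx; lia. Qed.

Lemma FA x j k : 1 <= j -> j < k -> k <= n - 1 ->
  pe (P k ++ [:: bl x j]) (bl x j.+1 :: P k).
Proof.
move=> Hj Hjk; elim: k Hjk => [//|k IH] Hjk Hk.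
case: (ltngtP j k) => [Hlt|Hgt|Heq]; [ | lia | ].
- rewrite P_S -catA /=.
  apply: pe_trans (_ : pe (P k ++ [:: bl x j; Sg k.+1]) _).
    apply: pe_appl; apply: pe_sym; apply: comm_bS; lia.
  rewrite -[[:: bl x j; _]]/([:: bl x j] ++ [:: Sg k.+1]) catA.
  apply: pe_trans (pe_appr _ (IH Hlt _)) _; first lia.
  by apply: pe_refl.
- subst k; case: j Hj IH Hjk Hk => [//|j] _ _ _ Hk.
  rewrite P_S P_S -!catA /=.
  apply: pe_trans (pe_appl _ (bl_sx1 x _ _)) _; try lia.
  change (pe (P j ++ [:: bl x j.+2] ++ [:: Sg j.+1; Sg j.+2]) ([:: bl x j.+2] ++ P j ++ [:: Sg j.+1; Sg j.+2])).
  rewrite !catA; apply: pe_appr; apply: (@comm_low x j.+2 j); [lia | lia | exact: low_P].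
Qed.

Definition Rw k := rev (P k).

Lemma FR x j k : 1 <= j -> j < k -> k <= n - 1 ->
  pe (Rw k ++ [:: bl x j.+1]) (bl x j :: Rw k).
Proof.
move=> H1 H2 H3; have := pe_rev (FA x H1 H2 H3).
rewrite rev_cat /= rev_cons -cats1 => H; apply: pe_sym; exact: H.
Qed.

Lemma Rw_S k : Rw k.+1 = Sg k.+1 :: Rw k.
Proof. by rewrite /Rw P_S rev_cat. Qed.

Lemma C_Dm m : m.+1 <= n - 1 -> pe (Dm m.+1) (Dm m ++ Rw m.+1).
Proof.
elim: m => [|m IH] Hm; first exact: pe_refl.
apply: pe_sym.
have E1 : Dm m.+1 ++ Rw m.+2 = P m.+1 ++ (Dm m ++ [:: bl false m.+2]) ++ Rw m.+1.
  by rewrite Dm_S Rw_S -!catA.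
rewrite E1.
apply: pe_trans (pe_appl _ (pe_appr _ (@comm_low false m.+2 m (Dm m) _ _ (low_Dm m)))) _; try lia.
rewrite [Dm m.+2]Dm_S [P m.+2]P_S -catA.
apply: (pe_appl (P m.+1)); apply: (pe_appl [:: Sg m.+2]).
apply: pe_sym; apply: IH; lia.
Qed.

Lemma Q_Dm m x i : m <= n - 1 -> 1 <= i <= m ->
  pe (Dm m ++ [:: bl x i]) (bl x (m.+1 - i) :: Dm m).
Proof.
elim: m i => [|m IH] i Hm Hi; first lia.
case: (ltngtP i m.+1) => [Hlt|Hgt|Heq]; [ | lia | ].
- rewrite Dm_S -catA.
  apply: pe_trans (pe_appl _ (IH i _ _)) _; try lia.
  rewrite -[bl x (m.+1 - i) :: _]/([:: bl x (m.+1 - i)] ++ _) catA.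
  apply: pe_trans (pe_appr _ (FA x _ _ _)) _; try lia.
  have -> : (m.+1 - i).+1 = m.+2 - i by lia.
  exact: pe_refl.
- subst i; have -> : m.+2 - m.+1 = 1 by lia.
  have [E0|Hm0] := eqVneq m 0.
    subst m; rewrite /Dm /P /=; clear IH; case: x => /=; last exact: pe_refl.
    by apply: pe_sym; apply: pe_rel; apply: R_xs; rewrite /ok_idx; lia.
  apply: pe_trans (pe_appr _ (C_Dm _)) _; first lia.
  rewrite -catA; apply: pe_trans (pe_appl _ (FR x _ _ _)) _; try lia.
  rewrite -[bl x m :: Rw m.+1]cat1s catA.
  apply: pe_trans (pe_appr _ (IH m _ _)) _; try lia.
  rewrite subSnn; apply: (pe_appl [:: bl x 1]); apply: pe_sym; apply: C_Dm; lia.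
Qed.


End Delta.

Set Implicit Arguments. Unset Strict Implicit. Unset Printing Implicit Defensive.

Lemma goodb_cat n u v : goodb n (u ++ v) = goodb n u && goodb n v.
Proof. exact: all_cat. Qed.

Section Tau.
Variable n : nat.
Hypothesis hn : 2 <= n.
Notation pe := (pos_eq n).
Notation Del := (Delta n).

Definition tau_l a := match a with Sg i => Sg (n - i) | Si i => Si (n - i) | X i => X (n - i) end.
Definition tauw := map tau_l.

Lemma good_Del : goodb n Del.
Proof. rewrite Delta_Dm; apply: (@low_good n (n - 1)) => //; exact: low_Dm. Qed.

Lemma Q1 a : goodl n a -> pe (Del ++ [:: a]) (tau_l a :: Del).
Proof.
case: a => // i /andP [_ /andP [H1 H2]] /=; rewrite Delta_Dm.
- have := @Q_Dm n (n - 1) false i (leqnn _); rewrite /= => H.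
  have E : (n - 1).+1 - i = n - i by lia.
  by rewrite -E; apply: H; move: H1 H2 => /= H1 H2; lia.
- have := @Q_Dm n (n - 1) true i (leqnn _); rewrite /= => H.
  have E : (n - 1).+1 - i = n - i by lia.
  by rewrite -E; apply: H; move: H1 H2 => /= H1 H2; lia.
Qed.

Lemma Qw w : goodb n w -> pe (Del ++ w) (tauw w ++ Del).
Proof.
elim: w => [|a w IH]; first by move=> _; rewrite cats0; apply: pe_refl.
move=> /andP [Ha Hw].
rewrite -cat1s catA; apply: pe_trans (pe_appr _ (Q1 Ha)) _.
apply: (pe_appl [:: tau_l a]); exact: IH.
Qed.

Lemma good_tau w : goodb n w -> goodb n (tauw w).
Proof.
move=> Hw; apply/allP => c /mapP [a Ha ->]; have := allP Hw a Ha.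
case: a {Ha} => //= i; rewrite /goodl /vl /=; lia.
Qed.

Lemma tau_rel l r : pos_relation n l r ->
  pos_relation n (tauw l) (tauw r) \/ pos_relation n (tauw r) (tauw l).
Proof.
case=> [i j [? ?] [? ?] H|i j [? ?] [? ?] H|i j [? ?] [? ?] H|i [? ?] [? ?]|i [? ?] [? ?]|i [? ?] [? ?]] /=.
- by left; apply: R_ss; rewrite /ok_idx; try split; lia.
- by left; apply: R_xx; rewrite /ok_idx; try split; lia.
- by left; apply: R_xs; rewrite /ok_idx; try split; lia.
- have E : n - i = (n - i.+1).+1 by lia.
  by right; rewrite E; apply: R_braid; rewrite /ok_idx; lia.
- have E : n - i = (n - i.+1).+1 by lia.
  by left; rewrite E; apply: R_sx2; rewrite /ok_idx; lia.
- have E : n - i = (n - i.+1).+1 by lia.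
  by left; rewrite E; apply: R_sx1; rewrite /ok_idx; lia.
Qed.

Lemma pe_tau u v : pe u v -> pe (tauw u) (tauw v).
Proof.
apply: crst_lift => a b [x [y [l [r [Hr [-> ->]]]]]].
rewrite /tauw !map_cat -/tauw; case: (tau_rel Hr) => H.
  by apply: rst_step; exists (tauw x), (tauw y), (tauw l), (tauw r).
by apply: rst_sym; apply: rst_step; exists (tauw x), (tauw y), (tauw r), (tauw l).
Qed.

Lemma tau_Del : pe (tauw Del) Del.
Proof.
have H := Qw good_Del; apply: pe_sym; apply: (rcancel_word (q := Del)) H.
by rewrite goodb_cat good_Del.
Qed.

Definition Dp j := flatten (nseq j Del).
Definition tauwk k w := map (iter k tau_l) w.

Lemma tauwk0 w : tauwk 0 w = w. Proof. by elim: w => //= a w ->. Qed.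
Lemma tauwkS k w : tauwk k.+1 w = tauw (tauwk k w). Proof. by rewrite /tauwk /tauw -map_comp. Qed.
Lemma tauwk_cat k u v : tauwk k (u ++ v) = tauwk k u ++ tauwk k v. Proof. exact: map_cat. Qed.
Lemma tauwkD a b w : tauwk a (tauwk b w) = tauwk (a + b) w.
Proof. rewrite /tauwk -map_comp; apply: eq_map => x /=; by rewrite iterD. Qed.

Lemma good_tauk k w : goodb n w -> goodb n (tauwk k w).
Proof. elim: k => [|k IH] Hw; first by rewrite tauwk0. rewrite tauwkS; apply: good_tau; exact: IH. Qed.

Lemma pe_tauk k u v : pe u v -> pe (tauwk k u) (tauwk k v).
Proof. elim: k => [|k IH] H; first by rewrite !tauwk0. rewrite !tauwkS; apply: pe_tau; exact: IH. Qed.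

Lemma good_Dp j : goodb n (Dp j).
Proof. elim: j => [//|j IH]; rewrite /Dp /= /goodb all_cat; apply/andP; split => //; exact: good_Del. Qed.

Lemma Dp_S j : Dp j.+1 = Del ++ Dp j. Proof. by []. Qed.
Lemma DpD a b : Dp (a + b) = Dp a ++ Dp b. Proof. by rewrite /Dp nseqD flatten_cat. Qed.

Lemma tauk_Del k : pe (tauwk k Del) Del.
Proof.
elim: k => [|k IH]; first by rewrite tauwk0; apply: pe_refl.
rewrite tauwkS; apply: pe_trans (pe_tau IH) _; exact: tau_Del.
Qed.

Lemma tauk_Dp k j : pe (tauwk k (Dp j)) (Dp j).
Proof.
elim: j => [|j IH]; first exact: pe_refl.
rewrite Dp_S tauwk_cat; apply: pe_app => //; exact: tauk_Del.
Qed.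

Lemma Qk j w : goodb n w -> pe (Dp j ++ w) (tauwk j w ++ Dp j).
Proof.
elim: j w => [|j IH] w Hw; first by rewrite tauwk0 cats0; apply: pe_refl.
rewrite Dp_S -catA; apply: pe_trans (pe_appl _ (IH _ Hw)) _.
rewrite catA; apply: pe_trans (pe_appr _ (Qw (good_tauk j Hw))) _.
by rewrite tauwkS -catA; apply: pe_refl.
Qed.

Lemma RDm m i : m <= n - 1 -> 1 <= i <= m -> exists Z, pe (Dm m) (Z ++ [:: Sg i]).
Proof.
elim: m i => [|m IH] i Hm Hi; first lia.
have HC := @C_Dm n m Hm.
case: (eqVneq i 1) => [->|Hi1].
  exists (Dm m ++ rev (map Sg (iota 2 m))); apply: pe_trans HC _.
  rewrite /Rw /P; have -> : iota 1 m.+1 = 1 :: iota 2 m by [].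
  by rewrite map_cons rev_cons -cats1 catA; apply: pe_refl.
have Hi2 : 1 <= i.-1 <= m by lia.
have [Z HZ] := IH i.-1 (ltnW Hm) Hi2.
exists (Z ++ Rw m.+1); apply: pe_trans HC _.
apply: pe_trans (pe_appr _ HZ) _; rewrite -!catA; apply: pe_appl.
have := @FR n false i.-1 m.+1 _ _ Hm; rewrite prednK; last lia.
move=> H; apply: pe_sym; apply: H; lia.
Qed.

Lemma RD i : 1 <= i <= n - 1 -> exists Z, goodb n Z /\ pe Del (Z ++ [:: Sg i]).
Proof.
move=> Hi; have [Z HZ] := @RDm (n - 1) i (leqnn _) Hi.
rewrite -Delta_Dm in HZ; exists Z; split => //.
have := pe_good HZ; rewrite good_Del goodb_cat => /esym /andP [] //.
Qed.

End Tau.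

Set Implicit Arguments. Unset Strict Implicit. Unset Printing Implicit Defensive.

Section Final.
Variable n : nat.
Hypothesis hn : 2 <= n.
Notation pe := (pos_eq n).
Notation sbe := (sb_eq n).
Notation Del := (Delta n).
Notation Dinv := (Delta_inv n).

Lemma sbe_refl w : sbe w w. Proof. exact: rst_refl. Qed.
Lemma sbe_sym u v : sbe u v -> sbe v u. Proof. exact: rst_sym. Qed.
Lemma sbe_trans u v w : sbe u v -> sbe v w -> sbe u w. Proof. exact: rst_trans. Qed.
Lemma sbe_app a b c d : sbe a b -> sbe c d -> sbe (a ++ c) (b ++ d). Proof. exact: crst_app. Qed.
Lemma sbe_appl a c d : sbe c d -> sbe (a ++ c) (a ++ d). Proof. by apply: sbe_app; apply: sbe_refl. Qed.
Lemma sbe_appr a b c : sbe a b -> sbe (a ++ c) (b ++ c).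
Proof. by move=> H; apply: sbe_app => //; apply: sbe_refl. Qed.
Lemma pe_sbe u v : pe u v -> sbe u v.
Proof.
apply: (crst_lift (g := id)) => a b [x [y [l [r [Hr [-> ->]]]]]].
by apply: rst_step; exists x, y, l, r; split => //; apply: R_pos.
Qed.
Lemma sbe_rel l r : sb_relation n l r -> sbe l r.
Proof. by move=> H; apply: rst_step; apply: step_rel. Qed.

Lemma inv_cancel w : low (n - 1) w ->
  sbe (w ++ rev (map inv_letter w)) [::] /\ sbe (rev (map inv_letter w) ++ w) [::].
Proof.
elim: w => [|a w IH] /=; first by split; apply: sbe_refl.
case: a => // i /andP [Hi Hw]; case: (IH Hw) => H1 H2.
have Hok : ok_idx n i by rewrite /ok_idx; lia.
rewrite rev_cons -cats1; split.
  apply: sbe_trans (_ : sbe ([:: Sg i] ++ [:: Si i]) _); last exact: sbe_rel (R_inv1 Hok).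
  rewrite catA; apply: (sbe_appl [:: Sg i]); exact: (sbe_appr [:: Si i] H1).
rewrite -catA; apply: sbe_trans (_ : sbe (rev (map inv_letter w) ++ w) _) => //.
apply: sbe_appl; exact: (sbe_appr w (sbe_rel (R_inv2 Hok))).
Qed.

Lemma low_Del : low (n - 1) Del. Proof. rewrite Delta_Dm; exact: low_Dm. Qed.

Lemma DDinv : sbe (Del ++ Dinv) [::]. Proof. exact: (inv_cancel low_Del).1. Qed.
Lemma DinvD : sbe (Dinv ++ Del) [::]. Proof. exact: (inv_cancel low_Del).2. Qed.

Definition DI k := flatten (nseq k Dinv).
Lemma DI_S k : DI k.+1 = Dinv ++ DI k. Proof. by []. Qed.
Lemma DID a b : DI (a + b) = DI a ++ DI b. Proof. by rewrite /DI nseqD flatten_cat. Qed.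

Lemma Dp0 : Dp n 0 = [::]. Proof. by []. Qed.
Lemma DpS' k : Dp n k.+1 = Dp n k ++ Del.
Proof. by rewrite -addn1 DpD Dp_S Dp0 cats0. Qed.
Lemma DIS' k : DI k.+1 = DI k ++ Dinv.
Proof. by rewrite -addn1 DID DI_S /DI /= cats0. Qed.

Lemma DpDI k : sbe (Dp n k ++ DI k) [::].
Proof.
elim: k => [|k IH]; first exact: sbe_refl.
rewrite DpS' DI_S -catA (catA Del Dinv).
by apply: sbe_trans (sbe_appl _ (sbe_appr _ DDinv)) _.
Qed.

Lemma DIDp k : sbe (DI k ++ Dp n k) [::].
Proof.
elim: k => [|k IH]; first exact: sbe_refl.
rewrite DIS' Dp_S -catA (catA Dinv Del).
by apply: sbe_trans (sbe_appl _ (sbe_appr _ DinvD)) _.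
Qed.

Lemma L1 a : goodl n a -> sbe ([:: a] ++ Dinv) (Dinv ++ [:: tau_l n a]).
Proof.
move=> Ha.
apply: sbe_trans (_ : sbe ((Dinv ++ Del) ++ ([:: a] ++ Dinv)) _).
  exact: (sbe_appr _ (sbe_sym DinvD)).
rewrite -catA (catA Del).
apply: sbe_trans (sbe_appl _ (sbe_appr _ (pe_sbe (Q1 hn Ha)))) _.
apply: sbe_appl; apply: (sbe_appl [:: tau_l n a]); exact: DDinv.
Qed.

Lemma Lw w : goodb n w -> sbe (w ++ Dinv) (Dinv ++ tauw n w).
Proof.
elim: w => [|a w IH]; first by move=> _; rewrite cats0; apply: sbe_refl.
move=> /andP [Ha Hw].
rewrite -cat1s -catA; apply: sbe_trans (sbe_appl _ (IH Hw)) _.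
rewrite catA; apply: sbe_trans (sbe_appr _ (L1 Ha)) _.
by rewrite -catA; apply: sbe_refl.
Qed.

Lemma Lk k w : goodb n w -> sbe (w ++ DI k) (DI k ++ tauwk n k w).
Proof.
elim: k w => [|k IH] w Hw; first by rewrite tauwk0 cats0; apply: sbe_refl.
rewrite DI_S [w ++ _]catA; apply: sbe_trans (sbe_appr _ (Lw Hw)) _.
rewrite -!catA; apply: sbe_appl.
have := IH _ (good_tau hn Hw); have -> : tauwk n k (tauw n w) = tauwk n k.+1 w.
  by rewrite -addn1 -tauwkD.
by [].
Qed.

Definition Zr i := epsilon (inhabits [::]) (fun Z => 1 <= i <= n - 1 -> goodb n Z /\ pe Del (Z ++ [:: Sg i])).

Lemma Zr_spec i : 1 <= i <= n - 1 -> goodb n (Zr i) /\ pe Del (Zr i ++ [:: Sg i]).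
Proof.
move=> Hi.
have Hex : exists Z, 1 <= i <= n - 1 -> goodb n Z /\ pe Del (Z ++ [:: Sg i]).
  by have [Z HZ] := RD hn Hi; exists Z.
exact: (epsilon_spec (inhabits [::]) _ Hex Hi).
Qed.

Lemma L2 i : 1 <= i <= n - 1 -> sbe [:: Si i] (Dinv ++ Zr i).
Proof.
move=> Hi; have [Hg He] := Zr_spec Hi.
have Hok : ok_idx n i by rewrite /ok_idx; lia.
apply: sbe_sym.
apply: sbe_trans (_ : sbe (Dinv ++ (Zr i ++ [:: Sg i]) ++ [:: Si i]) _).
  rewrite -catA; apply: sbe_appl; apply: sbe_sym.
  by have := sbe_appl (Zr i) (sbe_rel (R_inv1 Hok)); rewrite cats0.
apply: sbe_trans (sbe_appl _ (sbe_appr _ (pe_sbe (pe_sym He)))) _.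
rewrite catA; exact: (sbe_appr _ DinvD).
Qed.

Definition mulp (x y : nat * word) := (x.1 + y.1, tauwk n y.1 x.2 ++ y.2).
Definition phi1 a := match a with Si i => (1, Zr i) | _ => (0, [:: a]) end.
Fixpoint phi w := match w with [::] => (0, [::]) | a :: w' => mulp (phi1 a) (phi w') end.


Lemma phi_good w : valid_word n w -> goodb n (phi w).2.
Proof.
elim: w => [//|a w IH] /andP [Ha Hw] /=; rewrite goodb_cat IH // andbT.
apply: (good_tauk hn); case: a Ha => i Hi /=.
- by rewrite /goodb /= andbT.
- by case: (Zr_spec Hi).
- by rewrite /goodb /= andbT.
Qed.

Lemma phi_sb w : valid_word n w -> sbe w (DI (phi w).1 ++ (phi w).2).
Proof.
elim: w => [|a w IH] /=; first by move=> _; apply: sbe_refl.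
move=> /andP [Ha Hw]; have {}IH := IH Hw.
case: (phi w) IH => k P /= IH.
apply: sbe_trans (sbe_appl [:: a] IH) _.
case: a Ha => i Hi /=.
- rewrite add0n -[Sg i :: _]cat1s catA -[iter k _ _ :: P]cat1s catA.
  apply: sbe_appr; apply: Lk; rewrite /goodb /goodl /= andbT; exact: Hi.
- rewrite add1n DI_S.
  apply: sbe_trans (sbe_appr _ (L2 Hi)) _.
  rewrite -!catA; apply: sbe_appl; rewrite !catA; apply: sbe_appr.
  by apply: Lk; case: (Zr_spec Hi).
- rewrite add0n -[X i :: _]cat1s catA -[iter k _ _ :: P]cat1s catA.
  apply: sbe_appr; apply: Lk; rewrite /goodb /goodl /= andbT; exact: Hi.
Qed.

End Final.

Set Implicit Arguments. Unset Strict Implicit. Unset Printing Implicit Defensive.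

Lemma exists_min (Q : nat -> Prop) : (exists x, Q x) -> exists x, Q x /\ forall y, Q y -> x <= y.
Proof.
case=> x; elim/ltn_ind: x => x IH Hx.
case: (classic (exists y, Q y /\ y < x)) => [[y [Hy Hlt]]|H]; first exact: IH Hlt Hy.
exists x; split => // y Hy; rewrite leqNgt; apply/negP => Hlt; apply: H; by exists y.
Qed.

Lemma lexmin (L : nat) : forall (Pr : seq nat -> Prop), (forall s, Pr s -> size s = L) ->
  (exists s, Pr s) -> exists s, Pr s /\ forall t, Pr t -> lex_le s t.
Proof.
elim: L => [|L IH] Pr Hsz [s Hs].
  exists s; split => // t Ht; have := Hsz s Hs; by case: s {Hs}.
have Hex : exists h, exists t, Pr (h :: t).
  by case: s Hs (Hsz s Hs) => // h t Hs _; exists h, t.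
have [h0 [[t0 Ht0] Hmin]] := exists_min Hex.
have Hsz' : forall t, Pr (h0 :: t) -> size t = L by move=> t /Hsz [].
have [t1 [Ht1 Hm1]] := IH (fun t => Pr (h0 :: t)) Hsz' (ex_intro _ t0 Ht0).
exists (h0 :: t1); split => // t' Ht'.
case: t' Ht' (Hsz _ Ht') => // h t' Ht' _ /=.
have := Hmin h (ex_intro _ t' Ht'); rewrite leq_eqVlt => /orP [/eqP Eh|->] //.
by subst h; rewrite ltnn eqxx /= Hm1.
Qed.

Lemma lex_antisym s t : lex_le s t -> lex_le t s -> s = t.
Proof.
elim: s t => [|a s IH] [|b t] //= /orP [H1|/andP [/eqP E1 H1]] /orP [H2|/andP [/eqP E2 H2]].
- lia.
- subst; lia.
- subst; lia.
- by subst; rewrite (IH t).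
Qed.

Section Final2.
Variable n : nat.
Hypothesis hn : 2 <= n.
Notation pe := (pos_eq n).
Notation sbe := (sb_eq n).
Notation Del := (Delta n).
Notation Dinv := (Delta_inv n).

Lemma good_iff w : goodb n w <-> positive_word w /\ valid_word n w.
Proof.
rewrite /goodb /positive_word /valid_word.
elim: w => [|a w IH] /=; first by [].
rewrite /goodl /vl; split.
  case/andP => /andP [-> ->] /IH [-> ->]; done.
case=> /andP [-> H1] /andP [-> H2] /=; apply/IH; split => //.
Qed.

Lemma size_Del : 0 < size Del.
Proof.
rewrite Delta_Dm; have -> : n - 1 = (n - 2).+1 by lia.
rewrite Dm_S size_cat /P size_map size_iota; lia.
Qed.

Lemma prime_inv A B : prime_to_Delta n A -> pe A B -> prime_to_Delta n B.
Proof. move=> H HAB [Z [Hp [Hv HZ]]]; apply: H; exists Z; split => //; split => //; exact: pe_trans HAB HZ. Qed.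

Lemma extract P : goodb n P -> exists j A, [/\ goodb n A, pe P (Dp n j ++ A) & prime_to_Delta n A].
Proof.
move=> HP.
suff H : forall d j A, size A <= d -> goodb n A -> pe P (Dp n j ++ A) ->
    exists j A, [/\ goodb n A, pe P (Dp n j ++ A) & prime_to_Delta n A].
  by apply: (H (size P) 0 P) => //; apply: pe_refl.
elim=> [|d IH] j A Hs HA He; case: (classic (prime_to_Delta n A)) => Hpr; try by exists j, A.
all: have [Z [HZp [HZv HZ]]] : exists Z, positive_word Z /\ valid_word n Z /\ pe A (Del ++ Z)
       by apply: NNPP.
all: have Hsz := pe_size HZ; rewrite size_cat in Hsz; have := size_Del => Hd.
  lia.
apply: (IH j.+1 Z); first lia.
  by apply/good_iff.
rewrite DpS' -catA; apply: pe_trans He _; exact: pe_appl.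
Qed.

Lemma base A : goodb n A -> exists B, [/\ goodb n B, pe A B & is_own_base n B].
Proof.
move=> HA.
pose Pr s := exists B, [/\ goodb n B, pe A B & map (letter_rank n) B = s].
have Hsz : forall s, Pr s -> size s = size A.
  move=> s [B [_ HAB <-]]; rewrite size_map; exact: (esym (pe_size HAB)).
have Hex : exists s, Pr s by exists (map (letter_rank n) A), A; split => //; apply: pe_refl.
have [s0 [[B0 [HB0 HAB0 E0]] Hm]] := lexmin Hsz Hex.
exists B0; split => // B' Hp Hv HB'.
rewrite E0; apply: Hm; exists B'; split => //; [by apply/good_iff | exact: pe_trans HAB0 HB'].
Qed.

Lemma DI_Dp k j : sbe (DI n k ++ Dp n j) (Delta_pow n (Posz j - Posz k)%R).
Proof.
case: (leqP k j) => Hkj.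
  have E : j = k + (j - k) by lia.
  rewrite {1}E DpD catA; apply: sbe_trans (sbe_appr _ (DIDp hn k)) _.
  by rewrite subzn //; apply: sbe_refl.
have E : k = (k - j) + j by lia.
rewrite {1}E DID -catA; apply: sbe_trans (sbe_appl _ (DIDp hn j)) _.
have -> : (Posz j - Posz k)%R = Negz (k - j).-1 by rewrite NegzE; lia.
have E2 : (k - j).-1.+1 = k - j by lia.
by rewrite cats0 /Delta_pow E2; apply: sbe_refl.
Qed.

Lemma existence W : valid_word n W -> exists (m : int) (A : word),
  positive_word A /\ valid_word n A /\ prime_to_Delta n A /\ is_own_base n A /\
  sb_eq n W (Delta_pow n m ++ A).
Proof.
move=> HW; have H1 := phi_sb hn HW; have H2 := phi_good hn HW.
case: (phi n W) H1 H2 => k P /= H1 H2.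
have [j [A [HA HPA HprA]]] := extract H2.
have [B [HB HAB HbB]] := base HA.
have [Bp Bv] := (good_iff B).1 HB.
exists (Posz j - Posz k)%R, B; split => //; split => //; split; first exact: prime_inv HprA HAB.
split => //.
apply: sbe_trans H1 _.
apply: sbe_trans (sbe_appl _ (pe_sbe (pe_trans HPA (pe_appl _ HAB)))) _.
rewrite catA; apply: sbe_appr; exact: DI_Dp.
Qed.

End Final2.

Set Implicit Arguments. Unset Strict Implicit. Unset Printing Implicit Defensive.

Section Uniq.
Variable n : nat.
Hypothesis hn : 2 <= n.
Notation pe := (pos_eq n).
Notation sbe := (sb_eq n).
Notation Del := (Delta n).
Notation Dinv := (Delta_inv n).

Definition Er (x y : nat * word) := pe (Dp n y.1 ++ x.2) (Dp n x.1 ++ y.2).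

Lemma DpC a b : Dp n a ++ Dp n b = Dp n b ++ Dp n a.
Proof. by rewrite -!DpD addnC. Qed.

Lemma Er_refl x : Er x x. Proof. exact: pe_refl. Qed.
Lemma Er_sym x y : Er x y -> Er y x. Proof. exact: pe_sym. Qed.

Lemma Er_trans x y z : goodb n x.2 -> Er x y -> Er y z -> Er x z.
Proof.
case: x y z => k1 P1 [k2 P2] [k3 P3] /= Hg H1 H2; rewrite /Er /= in H1 H2 *.
apply: (@lcancel_word n (Dp n k2)).
  by rewrite !goodb_cat !good_Dp.
rewrite catA DpC -catA; apply: pe_trans (pe_appl _ H1) _.
rewrite catA DpC -catA; apply: pe_trans (pe_appl _ H2) _.
by rewrite catA DpC -catA; apply: pe_refl.
Qed.

Lemma Er_mulr x y z : goodb n x.2 -> goodb n y.2 -> Er x y -> Er (mulp n x z) (mulp n y z).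
Proof.
case: x y z => k1 P1 [k2 P2] [k P3] /= Hx Hy H; rewrite /Er /= in H *.
have H' := pe_tauk hn k H; rewrite !tauwk_cat in H'.
have H'' : pe (Dp n k2 ++ tauwk n k P1) (Dp n k1 ++ tauwk n k P2).
  apply: pe_trans (pe_appr _ (pe_sym (tauk_Dp hn k k2))) _.
  apply: pe_trans H' _; apply: pe_appr; exact: tauk_Dp.
rewrite (addnC k2) (addnC k1) !DpD -!catA; apply: pe_appl.
by rewrite !catA; apply: pe_appr.
Qed.

Lemma Er_mull x y z : goodb n x.2 -> goodb n y.2 -> goodb n z.2 -> Er x y ->
  Er (mulp n z x) (mulp n z y).
Proof.
case: x y z => k1 P1 [k2 P2] [k Q] /= Hx Hy Hz H; rewrite /Er /= in H *.
rewrite !DpD -!catA; apply: pe_appl.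
apply: pe_trans (_ : pe (tauwk n k2 (tauwk n k1 Q) ++ Dp n k2 ++ P1) _).
  rewrite !catA; apply: pe_appr; apply: Qk => //; exact: good_tauk.
apply: pe_trans (_ : pe (tauwk n k1 (tauwk n k2 Q) ++ Dp n k1 ++ P2) _); last first.
  rewrite !catA; apply: pe_appr; apply: pe_sym; apply: Qk => //; exact: good_tauk.
rewrite !tauwkD addnC; apply: pe_appl; exact: H.
Qed.

Lemma mulpA x y z : mulp n (mulp n x y) z = mulp n x (mulp n y z).
Proof.
case: x y z => k1 P1 [k2 P2] [k3 P3]; rewrite /mulp /= addnA tauwk_cat tauwkD catA.
by rewrite (addnC k3).
Qed.

Lemma phi_cat u v : phi n (u ++ v) = mulp n (phi n u) (phi n v).
Proof.
elim: u => [|a u IH] /=; first by case: (phi n v) => k P; rewrite /mulp /= add0n.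
by rewrite IH mulpA.
Qed.

Lemma phi_pos w : positive_word w -> phi n w = (0, w).
Proof.
elim: w => [//|a w IH] /= /andP [Ha Hw]; rewrite IH //.
by case: a Ha => // i _; rewrite /mulp /= tauwk0.
Qed.

End Uniq.

Set Implicit Arguments. Unset Strict Implicit. Unset Printing Implicit Defensive.

Section Uniq2.
Variable n : nat.
Hypothesis hn : 2 <= n.
Notation pe := (pos_eq n).
Notation sbe := (sb_eq n).
Notation Del := (Delta n).

Definition vw (w : word) : bool := all (fun a => (1 <= letter_index a) && (letter_index a <= n - 1)) w.

Lemma sbrel_valid l r : sb_relation n l r -> vw l /\ vw r.
Proof.
case=> [l' r' H|i [? ?]|i [? ?]].
- case: (rel_good H) => H1 H2; split; [move: H1 | move: H2];
    apply: sub_all => a /andP [_ Ha]; exact: Ha.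
- by rewrite /vw /=; split => //; lia.
- by rewrite /vw /=; split => //; lia.
Qed.


Lemma sbe_vw u v : sbe u v -> vw u = vw v.
Proof.
apply: crst_inv => a b [x [y [l [r [Hr [-> ->]]]]]].
case: (sbrel_valid Hr) => H1 H2; by rewrite /vw !all_cat -!/(vw _) H1 H2.
Qed.

Lemma phi_good' w : vw w -> goodb n (phi n w).2.
Proof. exact: phi_good. Qed.

Lemma Er_rel l r : sb_relation n l r -> Er n (phi n l) (phi n r).
Proof.
case=> [l' r' H|i [H1 H2]|i [H1 H2]].
- case: (rel_good H) => G1 G2.
  have [P1 _] := (good_iff n l').1 G1; have [P2 _] := (good_iff n r').1 G2.
  by rewrite /Er !phi_pos //; apply: pe_rel.
- have Hi : 1 <= i <= n - 1 by lia.
  have [Hg He] := Zr_spec hn Hi.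
  have -> : phi n [:: Sg i; Si i] = (1, Sg (n - i) :: Zr n i) by rewrite /= /mulp /= tauwk0 cats0.
  rewrite /Er /= (Dp_S n 0) (Dp0 n) !cats0; apply: pe_sym.
  apply: (@rcancel_word n [:: Sg i]).
    by rewrite goodb_cat (good_Del n) /goodb /= /goodl /vl /= Hi.
  apply: pe_trans (Q1 hn (_ : goodl n (Sg i))) _.
    by rewrite /goodl /vl /= Hi.
  exact: (pe_appl [:: Sg (n - i)] He).
- have Hi : 1 <= i <= n - 1 by lia.
  have [Hg He] := Zr_spec hn Hi.
  have -> : phi n [:: Si i; Sg i] = (1, Zr n i ++ [:: Sg i]) by rewrite /= /mulp /= tauwk0.
  by rewrite /Er /= (Dp_S n 0) (Dp0 n) !cats0; apply: pe_sym.
Qed.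

Lemma sbe_Er u v : sbe u v -> vw u -> Er n (phi n u) (phi n v).
Proof.
elim=> {u v} [x y [u [v [l [r [Hr [-> ->]]]]]]|x|x y Hxy IH|x y z Hxy IH1 Hyz IH2] Hx.
- move: Hx; rewrite /vw !all_cat -!/(vw _) => /and3P [Hu Hl Hv].
  have [_ Hr'] := sbrel_valid Hr.
  have Gu := phi_good' Hu; have Gl := phi_good' Hl; have Gv := phi_good' Hv; have Gr := phi_good' Hr'.
  have Glv : goodb n (mulp n (phi n l) (phi n v)).2.
    by rewrite /= goodb_cat Gv andbT; exact: good_tauk.
  have Grv : goodb n (mulp n (phi n r) (phi n v)).2.
    by rewrite /= goodb_cat Gv andbT; exact: good_tauk.
  rewrite !phi_cat; apply: (Er_mull hn Glv Grv Gu).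
  apply: (@Er_mulr n hn _ _ (phi n v) Gl Gr).
  exact: Er_rel.
- exact: Er_refl.
- apply: Er_sym; apply: IH; by rewrite (sbe_vw Hxy).
- have Hy : vw y by rewrite -(sbe_vw Hxy).
  apply: Er_trans (IH1 Hx) (IH2 Hy); exact: phi_good'.
Qed.

End Uniq2.


Set Implicit Arguments. Unset Strict Implicit. Unset Printing Implicit Defensive.

Section Uniq3.
Variable n : nat.
Hypothesis hn : 2 <= n.
Notation pe := (pos_eq n).
Notation sbe := (sb_eq n).
Notation Del := (Delta n).

Lemma DpPow K m : (`|m|%N <= K)%N -> exists a : nat, (Posz a = Posz K + m)%R /\
  sbe (Dp n K ++ Delta_pow n m) (Dp n a).
Proof.
case: m => j /= Hj.
  exists (K + j); split; first lia.
  by rewrite DpD; apply: sbe_refl.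
exists (K - j.+1); split; first by rewrite NegzE; lia.
have E : K = (K - j.+1) + j.+1 by lia.
rewrite {1}E DpD -catA; apply: sbe_trans (sbe_appl _ (DpDI hn j.+1)) _.
by rewrite cats0; apply: sbe_refl.
Qed.

Lemma rank_inj A C : goodb n A -> goodb n C ->
  map (letter_rank n) A = map (letter_rank n) C -> A = C.
Proof.
elim: A C => [|a A IH] [|c C] //= /andP [Ga GA] /andP [Gc GC] [E1 E2].
rewrite (IH C) //; congr cons.
move: Ga Gc E1; case: a => i; case: c => j; rewrite /goodl /vl /= => // /andP [H1 H2] /andP [H3 H4] E;
  first [lia | by rewrite E | by have -> : i = j by lia].
Qed.

Lemma good_vw w : goodb n w -> vw n w.
Proof. by apply: sub_all => a /andP [_ H]. Qed.

Lemma uniqueness (m p : int) (A C : word) :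
  positive_word A -> valid_word n A -> prime_to_Delta n A -> is_own_base n A ->
  positive_word C -> valid_word n C -> prime_to_Delta n C -> is_own_base n C ->
  sbe (Delta_pow n m ++ A) (Delta_pow n p ++ C) -> m = p /\ A = C.
Proof.
move=> pA vA prA bA pC vC prC bC H.
have GA : goodb n A by apply/good_iff.
have GC : goodb n C by apply/good_iff.
pose K := (`|m| + `|p|)%N.
have [a [Ea Ha]] := @DpPow K m (leq_addr _ _).
have [b [Eb Hb]] := @DpPow K p (leq_addl _ _).
have H2 : sbe (Dp n a ++ A) (Dp n b ++ C).
  apply: sbe_trans (sbe_appr _ (sbe_sym Ha)) _; rewrite -catA.
  apply: sbe_trans (sbe_appl _ H) _; rewrite catA; exact: sbe_appr Hb.
have GaA : goodb n (Dp n a ++ A) by rewrite goodb_cat good_Dp.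
have GbC : goodb n (Dp n b ++ C) by rewrite goodb_cat good_Dp.
have H3 := sbe_Er hn H2 (good_vw GaA).
rewrite !phi_pos in H3; try by case: ((good_iff n _).1 GaA); try by case: ((good_iff n _).1 GbC).
rewrite /Er /= in H3.
have Eab : a = b.
  case: (ltngtP a b) => // Hab.
    have E : b = a + (b - a) by lia.
    rewrite E DpD -catA in H3; have H4 := lcancel_word GaA H3.
    have E2 : b - a = (b - a).-1.+1 by lia.
    rewrite E2 Dp_S -catA in H4; exfalso; apply: prA.
    exists (Dp n (b - a).-1 ++ C); split; last split => //.
    - by case: ((good_iff n _).1 (_ : goodb n (Dp n (b - a).-1 ++ C))); rewrite // goodb_cat good_Dp.
    - by case: ((good_iff n _).1 (_ : goodb n (Dp n (b - a).-1 ++ C))); rewrite // goodb_cat good_Dp.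
  have E : a = b + (a - b) by lia.
  rewrite E DpD -catA in H3; have H4 := lcancel_word GbC (pe_sym H3).
  have E2 : a - b = (a - b).-1.+1 by lia.
  rewrite E2 Dp_S -catA in H4; exfalso; apply: prC.
  exists (Dp n (a - b).-1 ++ A); split; last split => //.
  - by case: ((good_iff n _).1 (_ : goodb n (Dp n (a - b).-1 ++ A))); rewrite // goodb_cat good_Dp.
  - by case: ((good_iff n _).1 (_ : goodb n (Dp n (a - b).-1 ++ A))); rewrite // goodb_cat good_Dp.
subst b; have HAC := lcancel_word GaA H3.
split; first lia.
apply: rank_inj => //; apply: lex_antisym.
  exact: bA.
by apply: bC => //; apply: pe_sym.
Qed.

End Uniq3.

Theorem theorem2p1 (n : nat) (hn : 2 <= n) :
  (forall W : word, valid_word n W ->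
     exists (m : int) (A : word),
       positive_word A /\ valid_word n A /\ prime_to_Delta n A /\
       is_own_base n A /\ sb_eq n W (Delta_pow n m ++ A))
  /\
  (forall (m p : int) (A C : word),
     positive_word A -> valid_word n A -> prime_to_Delta n A -> is_own_base n A ->
     positive_word C -> valid_word n C -> prime_to_Delta n C -> is_own_base n C ->
     sb_eq n (Delta_pow n m ++ A) (Delta_pow n p ++ C) ->
     m = p /\ A = C).
Proof.
split; [exact: existence hn | exact: uniqueness hn].
Qed.
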